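(* Let $k\ge3$ and $p\in(p_k,p_{k+1}]$, and let $\theta\in\bigl(\frac{2\pi}{k+2},\frac{2\pi}{k+1}\bigr]$ be defined by $2\cos\theta=\frac{2p-1}{1-p}$. Put $$G=\frac{2(1-\cos\theta)}{(k+1)-\dfrac{\sin\theta}{1-\cos\theta}\tan\bigl(\tfrac{k+1}{2}\theta\bigr)}.$$ Then $g_{\widetilde P_k}(p)=(1-p)(1-G)$, and the unique minimizer $x=(x_1,\dots,x_k)$ (with $x_a$ the weight of $v_a$) in the definition of $g_{\widetilde P_k}(p)$ is $$x_a=\frac{G}{2-2\cos\theta}\Bigl[1-\cos(a\theta)-\sin(a\theta)\tan\bigl(\tfrac{k+1}{2}\theta\bigr)\Bigr],\qquad a=1,\dots,k.$$ Furthermore, for $p\in(p_k,p_{k+1})$ one has $g_{\widetilde P_{k-1}}(p)>g_{\widetilde P_k}(p)$.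
   Context: A colored regularity graph (CRG) $K$ is a finite complete graph whose vertices are each colored white or black and whose edges are each colored white, black or gray. For $V(K)=\{v_1,\dots,v_k\}$ and $p\in[0,1]$, $M_K(p)$ is the symmetric $k\times k$ matrix with diagonal entry $p$ for a white vertex and $1-p$ for a black vertex, and off-diagonal entry $(i,j)$ equal to $p$ if $v_iv_j$ is white, $1-p$ if black, $0$ if gray; $g_K(p)=\min\{x^TM_K(p)x:x\in\mathbb R^k,\ x\ge0,\ \sum_ix_i=1\}$. For $k\ge2$, $\widetilde P_k$ is the CRG with $k$ white vertices $v_1,\dots,v_k$, gray edges $v_iv_{i+1}$ ($1\le i<k$) and all other edges black. For $k\ge2$, $p_k=1-\frac{1}{2\cos(2\pi/(k+1))+2}$. *)

(* Defs.v *)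
From HB Require Import structures.
From mathcomp Require Import all_boot all_order all_algebra.
From mathcomp Require Import all_classical all_reals all_analysis.
Set Implicit Arguments. Unset Strict Implicit. Unset Printing Implicit Defensive.
Import Order.TTheory GRing.Theory Num.Theory.
Local Open Scope classical_set_scope.
Local Open Scope ring_scope.

Inductive vcolor := VWhite | VBlack.
Inductive ecolor := EWhite | EBlack | EGray.

(* A colored regularity graph: complete graph on vertex set 'I_n; the
   edge colour function is symmetric; its value on the diagonal is unused. *)
Unset Implicit Arguments.
Record CRG := MkCRG {
  crg_size : nat;
  crg_vcol : 'I_crg_size -> vcolor;
  crg_ecol : 'I_crg_size -> 'I_crg_size -> ecolor;
  crg_ecol_sym : forall i j, crg_ecol i j = crg_ecol j i }.

Set Implicit Arguments.
Section CRGDefs.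
Variable R : realType.

Definition vweight (c : vcolor) (p : R) : R :=
  match c with VWhite => p | VBlack => 1 - p end.
Definition eweight (c : ecolor) (p : R) : R :=
  match c with EWhite => p | EBlack => 1 - p | EGray => 0 end.

Definition M_K (K : CRG) (p : R) : 'M[R]_(crg_size K) :=
  \matrix_(i, j) (if i == j then vweight (crg_vcol K i) p
                  else eweight (crg_ecol K i j) p).

Definition qform (n : nat) (M : 'M[R]_n) (x : 'I_n -> R) : R :=
  \sum_(i < n) \sum_(j < n) x i * M i j * x j.

Definition in_simplex (n : nat) (x : 'I_n -> R) : Prop :=
  (forall i, 0 <= x i) /\ \sum_(i < n) x i = 1.

Definition g_K (K : CRG) (p : R) : R :=
  inf [set y | exists2 x, in_simplex x & y = qform (M_K K p) x].

Definition is_minimizer (K : CRG) (p : R) (x : 'I_(crg_size K) -> R) : Prop :=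
  in_simplex x /\ qform (M_K K p) x = g_K K p.

Definition p_k (k : nat) : R :=
  1 - (2 * cos (2 * pi / k.+1%:R) + 2)^-1.
End CRGDefs.
Arguments M_K {R}.
Arguments g_K {R}.
Arguments is_minimizer {R}.
Arguments qform {R n}.
Arguments in_simplex {R n}.

Definition Pk_ecol (k : nat) (i j : 'I_k) : ecolor :=
  if ((i : nat).+1 == j) || ((j : nat).+1 == i) then EGray else EBlack.

Lemma Pk_ecol_sym k (i j : 'I_k) : Pk_ecol i j = Pk_ecol j i.
Proof. by rewrite /Pk_ecol orbC. Qed.

Definition Ptilde (k : nat) : CRG :=
  @MkCRG k (fun _ => VWhite) (@Pk_ecol k) (@Pk_ecol_sym k).

(* Main.v *)
Require Import Defs.
From HB Require Import structures.
From mathcomp Require Import all_boot all_order all_algebra.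
From mathcomp Require Import all_classical all_reals all_analysis.
From mathcomp Require Import ring lra zify.
From Stdlib Require Import Lia.
Import Order.TTheory GRing.Theory Num.Theory.
Local Open Scope ring_scope.

Section S.
Variable R : realType.
Lemma sinD2pin (x : R) (d : nat) : sin (x + 2 * pi * d%:R) = sin x.
Proof.
have -> : 2 * pi * d%:R = (pi *+ 2) *+ d :> R by rewrite -[(pi *+ 2) *+ d]mulr_natr -[pi *+ 2]mulr_natr [pi * _]mulrC.
exact: (periodicn (@sinD2pi R)).
Qed.

Lemma cos_sum_zero (n d : nat) : (0 < d)%N -> (d < n)%N ->
  \sum_(j < n) cos (j%:R * d%:R * (2 * pi / n%:R)) = 0 :> R.
Proof.
move=> d0 dn.
have n0 : (n%:R : R) != 0 by rewrite pnatr_eq0 -lt0n (leq_ltn_trans _ dn).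
set h : R := d%:R * pi / n%:R.
have hpos : 0 < sin h.
  apply: sin_gt0_pi; apply/andP; split.
  - by rewrite /h divr_gt0 // ?mulr_gt0 ?pi_gt0 ?ltr0n // (leq_ltn_trans _ dn).
  - rewrite /h ltr_pdivrMr ?ltr0n ?(leq_ltn_trans _ dn) //.
    by rewrite mulrC ltr_pM2l ?pi_gt0 // ltr_nat.
have key : forall j : nat, 2 * sin h * cos (j%:R * d%:R * (2 * pi / n%:R))
   = sin ((2 * j.+1%:R - 1) * h) - sin ((2 * j%:R - 1) * h).
  move=> j.
  have -> : j%:R * d%:R * (2*pi/n%:R) = 2 * j%:R * h by rewrite /h; ring.
  have -> : (2 * j.+1%:R - 1) * h = 2*j%:R*h + h by rewrite -natr1; ring.
  have -> : (2*j%:R - 1)*h = 2*j%:R*h - h by ring.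
  rewrite sinD sinB; ring.
have : 2 * sin h * \sum_(j<n) cos (j%:R * d%:R * (2 * pi / n%:R)) = 0.
  rewrite mulr_sumr.
  under eq_bigr do rewrite key.
  rewrite -(big_mkord xpredT (fun j => sin ((2 * j.+1%:R - 1) * h) - sin ((2 * j%:R - 1) * h))).
  rewrite (telescope_sumr (fun j : nat => sin ((2 * j%:R - 1) * h))) //.
  have -> : (2 * n%:R - 1) * h = - h + 2 * pi * d%:R by rewrite /h; field.
  by rewrite sinD2pin mulr0 add0r mulN1r subrr.
move/eqP; rewrite mulf_eq0 mulf_eq0 (gt_eqF hpos) orbF => /orP[|/eqP//].
by rewrite pnatr_eq0.
Qed.

Lemma Ecos_nat (n a b : nat) : (a - b < n)%N -> (b - a < n)%N ->
  \sum_(j < n) cos (j%:R * (a%:R - b%:R) * (2 * pi / n%:R)) = (if a == b then n%:R else 0) :> R.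
Proof.
move=> h1 h2.
case: (ltngtP a b) => hab.
- idtac.
  have e : a%:R - b%:R = - ((b - a)%:R) :> R by rewrite natrB ?(ltnW hab) // opprB.
  under eq_bigr => j _ do rewrite e mulrN mulNr cosN.
  apply: cos_sum_zero => //; lia.
- idtac.
  have e : a%:R - b%:R = (a - b)%:R :> R by rewrite natrB ?(ltnW hab).
  under eq_bigr => j _ do rewrite e.
  apply: cos_sum_zero => //; lia.
- rewrite ?hab ?eqxx.
  under eq_bigr => j _ do rewrite subrr mulr0 mul0r cos0.
  by rewrite sumr_const card_ord.
Qed.

Lemma sq_sum (k : nat) (F : 'I_k -> R) :
  (\sum_(i < k) F i) ^+ 2 = \sum_(i < k) \sum_(l < k) F i * F l.
Proof.
rewrite expr2 big_distrl; apply: eq_bigr => i _; by rewrite big_distrr.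
Qed.

Definition bm (c : R) (i l : nat) : R :=
  (if i == l then 2 * c else 0) - (if (i.+1 == l) || (l.+1 == i) then 1 else 0).
Definition Qf (c : R) (k : nat) (y : 'I_k -> R) : R :=
  \sum_(i < k) \sum_(l < k) y i * bm c i l * y l.
Arguments Qf c {k} y.

Lemma pt (n a b : nat) (ya yb : R) : (a - b < n)%N -> (b - a < n)%N ->
  (a.+1 - b < n)%N -> (b - a.+1 < n)%N -> (a - b.+1 < n)%N -> (b.+1 - a < n)%N ->
  \sum_(j < n) (cos (2 * pi / n%:R) - cos (j%:R * (2 * pi / n%:R))) *
     (ya * cos (j%:R * a%:R * (2 * pi / n%:R)) * (yb * cos (j%:R * b%:R * (2 * pi / n%:R)))
      + ya * sin (j%:R * a%:R * (2 * pi / n%:R)) * (yb * sin (j%:R * b%:R * (2 * pi / n%:R))))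
  = ya * yb * (cos (2 * pi / n%:R) * (if a == b then n%:R else 0)
      - ((if a.+1 == b then n%:R else 0) + (if a == b.+1 then n%:R else 0)) / 2).
Proof.
move=> h1 h2 h3 h4 h5 h6.
have step : forall j : nat,
  (cos (2 * pi / n%:R) - cos (j%:R * (2 * pi / n%:R))) *
     (ya * cos (j%:R * a%:R * (2 * pi / n%:R)) * (yb * cos (j%:R * b%:R * (2 * pi / n%:R)))
      + ya * sin (j%:R * a%:R * (2 * pi / n%:R)) * (yb * sin (j%:R * b%:R * (2 * pi / n%:R))))
  = ya * yb * cos (2 * pi / n%:R) * cos (j%:R * (a%:R - b%:R) * (2 * pi / n%:R))
    - ya * yb / 2 * cos (j%:R * (a.+1%:R - b%:R) * (2 * pi / n%:R))
    - ya * yb / 2 * cos (j%:R * (a%:R - b.+1%:R) * (2 * pi / n%:R)).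
  move=> j.
  have e1 : cos (j%:R * a%:R * (2 * pi / n%:R)) * cos (j%:R * b%:R * (2 * pi / n%:R))
     + sin (j%:R * a%:R * (2 * pi / n%:R)) * sin (j%:R * b%:R * (2 * pi / n%:R))
     = cos (j%:R * (a%:R - b%:R) * (2 * pi / n%:R)) :> R.
    by rewrite -cosB; congr cos; ring.
  have e2 : cos (j%:R * (a.+1%:R - b%:R) * (2 * pi / n%:R)) =
     cos (j%:R * (a%:R - b%:R) * (2 * pi / n%:R)) * cos (j%:R * (2 * pi / n%:R))
     - sin (j%:R * (a%:R - b%:R) * (2 * pi / n%:R)) * sin (j%:R * (2 * pi / n%:R)) :> R.
    by rewrite -cosD; congr cos; rewrite -[a.+1%:R]natr1; ring.
  have e3 : cos (j%:R * (a%:R - b.+1%:R) * (2 * pi / n%:R)) =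
     cos (j%:R * (a%:R - b%:R) * (2 * pi / n%:R)) * cos (j%:R * (2 * pi / n%:R))
     + sin (j%:R * (a%:R - b%:R) * (2 * pi / n%:R)) * sin (j%:R * (2 * pi / n%:R)) :> R.
    by rewrite -cosB; congr cos; rewrite -[b.+1%:R]natr1; ring.
  rewrite e2 e3 -e1; field; by rewrite ?pnatr_eq0.
under eq_bigr => j _ do rewrite step.
rewrite !sumrB -!mulr_sumr !Ecos_nat //; move: (if a == b then _ else _) (if a.+1 == b then _ else _) (if a == b.+1 then _ else _) => X Y Z; ring.
Qed.

Lemma comb (c N : R) (i l : nat) :
  c * (if i.+1 == l.+1 then N else 0)
   - ((if i.+2 == l.+1 then N else 0) + (if i.+1 == l.+2 then N else 0)) / 2
  = N / 2 * bm c i l.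
Proof.
rewrite /bm !eqSS [i == l.+1]eq_sym.
case: (@eqP _ i l) => ?; case: (@eqP _ i.+1 l) => ?; case: (@eqP _ l.+1 i) => ? /=. all: try (by exfalso; lia). all: lra.
 
Qed.

Lemma fourier (k : nat) (y : 'I_k -> R) :
  \sum_(j < k.+1) (cos (2 * pi / k.+1%:R) - cos (j%:R * (2 * pi / k.+1%:R))) *
    ((\sum_(i < k) y i * cos (j%:R * (i:nat).+1%:R * (2 * pi / k.+1%:R))) ^+ 2
     + (\sum_(i < k) y i * sin (j%:R * (i:nat).+1%:R * (2 * pi / k.+1%:R))) ^+ 2)
  = k.+1%:R / 2 * Qf (cos (2 * pi / k.+1%:R)) y.
Proof.
have E : forall j : 'I_k.+1,
  (cos (2 * pi / k.+1%:R) - cos (j%:R * (2 * pi / k.+1%:R))) *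
    ((\sum_(i < k) y i * cos (j%:R * (i:nat).+1%:R * (2 * pi / k.+1%:R))) ^+ 2
     + (\sum_(i < k) y i * sin (j%:R * (i:nat).+1%:R * (2 * pi / k.+1%:R))) ^+ 2)
  = \sum_(i < k) \sum_(l < k) (cos (2 * pi / k.+1%:R) - cos (j%:R * (2 * pi / k.+1%:R))) *
     (y i * cos (j%:R * (i:nat).+1%:R * (2 * pi / k.+1%:R)) * (y l * cos (j%:R * (l:nat).+1%:R * (2 * pi / k.+1%:R)))
      + y i * sin (j%:R * (i:nat).+1%:R * (2 * pi / k.+1%:R)) * (y l * sin (j%:R * (l:nat).+1%:R * (2 * pi / k.+1%:R)))).
  move=> j; rewrite !sq_sum -big_split mulr_sumr; apply: eq_bigr => i _.
  by rewrite -big_split mulr_sumr.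
rewrite (eq_bigr _ (fun j _ => E j)).
rewrite exchange_big /=.
under eq_bigr => i _ do rewrite exchange_big /=.
rewrite /Qf mulr_sumr; apply: eq_bigr => i _; rewrite mulr_sumr; apply: eq_bigr => l _.
have := ltn_ord i; have := ltn_ord l => hl hi.
rewrite pt; try lia.
rewrite comb; field; by rewrite ?pnatr_eq0.
Qed.

Lemma cos_le_c0 (n j : nat) : (0 < j)%N -> (j < n)%N ->
  cos (j%:R * (2 * pi / n%:R)) <= cos (2 * pi / n%:R) :> R.
Proof.
move=> j0 jn.
have n0 : (0 : R) < n%:R by rewrite ltr0n; lia.
have p0 := @pi_ge0 R.
have inI : forall m : nat, (m.*2 <= n)%N -> m%:R * (2 * pi / n%:R) \in `[0, (pi : R)].
  move=> m mn; rewrite in_itv /=; apply/andP; split.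
  - by rewrite mulr_ge0 // divr_ge0 // ?mulr_ge0 // ltW.
  - rewrite mulrA ler_pdivrMr //.
    have : (m.*2)%:R <= n%:R :> R by rewrite ler_nat.
    rewrite -mul2n natrM => h; nra.
have half : forall m : nat, (0 < m)%N -> (m.*2 <= n)%N ->
    cos (m%:R * (2 * pi / n%:R)) <= cos (2 * pi / n%:R) :> R.
  move=> m m0 mn.
  have [->|m1] := eqVneq m 1%N; first by rewrite mul1r.
  have i1 := inI m mn.
  have i2 : 2 * pi / n%:R \in `[0, (pi : R)].
    rewrite -[X in X \in _]mul1r; apply: (inI 1%N); lia.
  apply: ltW; rewrite ltr_cos //.
  have ph0 : 0 < 2 * pi / n%:R :> R by rewrite divr_gt0 // mulr_gt0 // pi_gt0.
  rewrite -{1}[2 * pi / n%:R]mul1r ltr_pM2r // ltr1n; lia.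
case: (leqP j.*2 n) => hj; first exact: half.
have -> : cos (j%:R * (2 * pi / n%:R)) = cos ((n - j)%:R * (2 * pi / n%:R)) :> R.
  rewrite natrB ?(ltnW jn) // mulrBl.
  have -> : n%:R * (2 * pi / n%:R) = pi *+ 2 :> R.
    by rewrite mulrC divfK ?(gt_eqF n0) // mulr_natl.
  rewrite -[in RHS]cosN opprB.
  by rewrite -(cosD2pi (j%:R * (2 * pi / n%:R) - pi *+ 2)) subrK.
apply: half; lia.
Qed.

Lemma Qf0_ge0 (k : nat) (y : 'I_k -> R) :
  \sum_(i < k) y i = 0 -> 0 <= Qf (cos (2 * pi / k.+1%:R)) y.
Proof.
move=> sy.
have h := fourier k y.
have p0 : (0:R) < k.+1%:R / 2 by rewrite divr_gt0 ?ltr0n.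
rewrite -(pmulr_rge0 _ p0) -h.
apply: sumr_ge0 => -[[|j] hj] _ /=.
- have e1 : \sum_(i < k) y i * cos (0%:R * (i:nat).+1%:R * (2 * pi / k.+1%:R)) = 0.
    rewrite -[RHS]sy; apply: eq_bigr => i _; by rewrite mul0r mul0r cos0 mulr1.
  have e2 : \sum_(i < k) y i * sin (0%:R * (i:nat).+1%:R * (2 * pi / k.+1%:R)) = 0.
    by apply: big1 => i _; rewrite mul0r mul0r sin0 mulr0.
  by rewrite e1 e2 !expr2 !mulr0 addr0 mulr0.
- apply: mulr_ge0; first by rewrite subr_ge0; apply: cos_le_c0.
  by rewrite addr_ge0 // sqr_ge0.
Qed.

Lemma bmC (c : R) (i l : nat) : bm c i l = bm c l i.
Proof. by rewrite /bm eq_sym orbC. Qed.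

Lemma Qf_add (c : R) k (u v : 'I_k -> R) :
  Qf c (fun i => u i + v i) =
  Qf c u + Qf c v + 2 * \sum_(i < k) v i * \sum_(l < k) bm c i l * u l.
Proof.
rewrite /Qf.
have e : forall i l : 'I_k, (u i + v i) * bm c i l * (u l + v l) =
   u i * bm c i l * u l + v i * bm c i l * v l
   + (v i * (bm c i l * u l) + v l * (bm c l i * u i)).
  by move=> i l; rewrite (bmC c l i); ring.
under eq_bigr => i _ do (under eq_bigr => l _ do rewrite e; rewrite !big_split /=).
rewrite !big_split /=.
have -> : \sum_(i < k) \sum_(l < k) v l * (bm c l i * u i) =
          \sum_(i < k) \sum_(l < k) v i * (bm c i l * u l) by rewrite exchange_big.
under [X in _ = _ + _ + 2 * X]eq_bigr => i _ do rewrite mulr_sumr.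
ring.
Qed.

Lemma Qf_Bx (c : R) k (u : 'I_k -> R) :
  Qf c u = \sum_(i < k) u i * \sum_(l < k) bm c i l * u l.
Proof.
by apply: eq_bigr => i _; rewrite mulr_sumr; apply: eq_bigr => l _; rewrite mulrA.
Qed.

Lemma sum_pick k (i : 'I_k) (F : 'I_k -> R) :
  \sum_(l < k) (if (i:nat) == l then F l else 0) = F i.
Proof.
rewrite (bigD1 i) //= eqxx big1 ?addr0 // => l hl; case: eqP => // e.
by move: hl; rewrite -val_eqE /= -e eqxx.
Qed.

Lemma Qf_shift (c c0 : R) k (y : 'I_k -> R) :
  Qf c y = Qf c0 y + 2 * (c - c0) * \sum_(i < k) y i ^+ 2.
Proof.
have e : forall i l : 'I_k, y i * bm c i l * y l = y i * bm c0 i l * y l +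
   (if (i:nat) == l then 2 * (c - c0) * (y i * y l) else 0).
  by move=> i l; rewrite /bm; case: ifP => _; case: ifP => _; ring.
rewrite /Qf.
under eq_bigr => i _ do (under eq_bigr => l _ do rewrite e; rewrite big_split /=).
rewrite big_split /= mulr_sumr; congr (_ + _); apply: eq_bigr => i _.
by rewrite sum_pick expr2.
Qed.

Lemma sum_pick_nat k (m : nat) (G : nat -> R) : ((m < k)%N \/ G m = 0) ->
  \sum_(l < k) (if m == (l:nat) then G l else 0) = G m.
Proof.
case => [mk | G0].
- rewrite (bigD1 (Ordinal mk)) //= eqxx big1 ?addr0 // => l hl; case: eqP => // e.
  by move: hl; rewrite -val_eqE /= -e eqxx.
- rewrite G0; apply: big1 => l _; case: eqP => // <-; exact: G0.
Qed.

Lemma bm_apply (c : R) k (i : 'I_k) (F : nat -> R) : F 0%N = 0 -> F k.+1 = 0 ->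
  \sum_(l < k) bm c i l * F l.+1 = 2 * c * F i.+1 - F i - F i.+2.
Proof.
move=> F0 Fk.
have e : forall l : 'I_k, bm c i l * F l.+1 =
   (if (i:nat) == l then 2 * c * F l.+1 else 0)
   - (if i.+1 == (l:nat) then F l.+1 else 0) - (if (l:nat).+1 == i then F l.+1 else 0).
  move=> l; rewrite /bm.
  case: (@eqP nat i l) => ?; case: (@eqP nat i.+1 l) => ?; case: (@eqP nat l.+1 i) => ? /=;
    first [by exfalso; lia | ring].
under eq_bigr => l _ do rewrite e.
rewrite !sumrB.
rewrite (sum_pick_nat _ _ (fun l => 2 * c * F l.+1)); last by left.
rewrite (sum_pick_nat _ _ (fun l => F l.+1)); last first.
  have := ltn_ord i; case: (ltnP i.+1 k) => h hi; first by left.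
  by right; have -> : i.+2 = k.+1 by lia.
have -> : \sum_(l < k) (if (l:nat).+1 == i then F l.+1 else 0) = F i.
  case: (nat_of_ord i) (ltn_ord i) => [|i'] hi.
  - by rewrite F0; apply: big1 => l _.
  - under eq_bigr => l _ do rewrite eqSS eq_sym.
    rewrite (sum_pick_nat _ _ (fun l => F l.+1)) //; left; lia.
ring.
Qed.
End S.

Definition fT {R : realType} (k : nat) (th : R) (a : nat) : R :=
  1 - cos (a%:R * th) - sin (a%:R * th) * tan (k.+1%:R / 2 * th).

Section Trig.
Variable R : realType.
Variables (k : nat) (th : R).
Hypothesis hk : (1 <= k)%N.
Hypothesis h1 : 2 * pi / k.+2%:R < th.
Hypothesis h2 : th <= 2 * pi / k.+1%:R.

Lemma th_gt0 : 0 < th.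
Proof. by apply: lt_trans h1; rewrite divr_gt0 ?mulr_gt0 ?pi_gt0 ?ltr0n. Qed.

Lemma e1k : k.+1%:R = k%:R + 1 :> R.
Proof. by rewrite -natr1. Qed.

Lemma u_bounds : pi / 2 < k.+1%:R / 2 * th /\ k.+1%:R / 2 * th <= pi.
Proof.
have hp := @pi_gt0 R; have t0 := th_gt0.
have K0 : (0:R) <= k%:R by rewrite ler0n.
have e2 : k.+2%:R = k%:R + 2 :> R by rewrite -[k.+2%:R]natr1 e1k; ring.
move: h1 h2; rewrite ltr_pdivrMr ?ltr0n // ler_pdivlMr ?ltr0n // e1k e2 => a b.
split; nra.
Qed.

Lemma th_lepi : th <= pi.
Proof.
have hp := @pi_gt0 R; have t0 := th_gt0.
have K1 : (1:R) <= k%:R by rewrite ler1n.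
move: h2; rewrite ler_pdivlMr ?ltr0n // e1k => b; nra.
Qed.

Lemma cosu_lt0 : cos (k.+1%:R / 2 * th) < 0.
Proof.
have hp := @pi_gt0 R; case: u_bounds => a b.
rewrite -[X in _ < X]cos_pihalf ltr_cos.
all: try (rewrite in_itv /=; apply/andP; split; lra).
exact: a.
Qed.

Lemma cosu_neq0 : cos (k.+1%:R / 2 * th) != 0.
Proof. by rewrite lt_eqF // cosu_lt0. Qed.

Lemma cos_th_lt1 : cos th < 1.
Proof.
have hp := @pi_gt0 R; have t0 := th_gt0; have tp := th_lepi.
rewrite -[X in _ < X]cos0 ltr_cos //.
all: rewrite in_itv /=; apply/andP; split; lra.
Qed.

Lemma fT_alt (a : nat) : fT k th a =
  1 - cos (a%:R * th - k.+1%:R / 2 * th) / cos (k.+1%:R / 2 * th).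
Proof.
have cn := cosu_neq0.
rewrite /fT /tan cosB; field; exact: cn.
Qed.

Lemma fT_pos (a : nat) : (1 <= a)%N -> (a <= k)%N -> 0 < fT k th a.
Proof.
move=> a1 ak; rewrite fT_alt.
have [hu1 hu2] := u_bounds; have t0 := th_gt0; have hp := @pi_gt0 R.
have A1 : (1:R) <= a%:R by rewrite ler1n.
have Ak : a%:R <= k%:R :> R by rewrite ler_nat.
have nw : `|a%:R * th - k.+1%:R / 2 * th| <= k.+1%:R / 2 * th - th.
  rewrite ler_norml e1k; apply/andP; split; nra.
have cw : cos (k.+1%:R / 2 * th) < cos (a%:R * th - k.+1%:R / 2 * th).
  rewrite -[X in _ < X]cos_norm ltr_cos.
  all: try (rewrite in_itv /=; apply/andP; split; [| lra]).
  all: try (by apply: normr_ge0).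
  all: try lra.
have cu := cosu_lt0.
have cn := cosu_neq0.
have -> : 1 - cos (a%:R * th - k.+1%:R / 2 * th) / cos (k.+1%:R / 2 * th) =
  (cos (a%:R * th - k.+1%:R / 2 * th) - cos (k.+1%:R / 2 * th)) / (- cos (k.+1%:R / 2 * th)).
  by field; exact: cn.
by rewrite divr_gt0 // ?subr_gt0 // oppr_gt0.
Qed.

Lemma fT_rec (a : nat) :
  2 * cos th * fT k th a.+1 - fT k th a - fT k th a.+2 = 2 * cos th - 2.
Proof.
rewrite /fT; set T := tan _.
have ea : a%:R * th = a.+1%:R * th - th :> R by rewrite -[a.+1%:R]natr1; ring.
have eb : a.+2%:R * th = a.+1%:R * th + th :> R by rewrite -[a.+2%:R]natr1; ring.
rewrite ea eb cosB sinB cosD sinD; ring.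
Qed.

Lemma fT0 : fT k th 0 = 0.
Proof. by rewrite /fT mul0r cos0 sin0 mul0r subrr subr0. Qed.

Lemma fTk1 : fT k th k.+1 = 0.
Proof.
have cn := cosu_neq0.
rewrite /fT /tan.
have -> : k.+1%:R * th = k.+1%:R / 2 * th + k.+1%:R / 2 * th :> R by lra.
rewrite cosD sinD.
set cu := cos _; set su := sin _.
have c2 : cu ^+ 2 + su ^+ 2 = 1 by apply: cos2Dsin2.
have -> : (su * cu + cu * su) * (su / cu) = 2 * su ^+ 2 by field; exact: cn.
nra.
Qed.

Lemma fTk_eq1 : fT k th k = fT k th 1.
Proof.
rewrite !fT_alt; congr (1 - _ / _).
rewrite -[LHS]cosN; congr cos; rewrite e1k; lra.
Qed.

Lemma fT_sum : \sum_(i < k) fT k th i.+1 =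
  k.+1%:R - sin th / (1 - cos th) * tan (k.+1%:R / 2 * th).
Proof.
have c1 : 1 - cos th != 0 by rewrite gt_eqF // subr_gt0 cos_th_lt1.
have c2 : 2 * cos th - 2 != 0 by rewrite lt_eqF //; have := cos_th_lt1; lra.
set S := \sum_(i < k) _.
have r : forall i : nat, 2 * cos th * fT k th i.+1 - fT k th i - fT k th i.+2 =
  (2 * cos th - 2) * fT k th i.+1 - ((fT k th i.+2 - fT k th i.+1) - (fT k th i.+1 - fT k th i)).
  by move=> i; ring.
have hsum : \sum_(i < k) (2 * cos th * fT k th i.+1 - fT k th i - fT k th i.+2)
   = k%:R * (2 * cos th - 2).
  under eq_bigr do rewrite fT_rec.
  by rewrite sumr_const card_ord [RHS]mulr_natl.
have tel : \sum_(i < k) ((fT k th i.+2 - fT k th i.+1) - (fT k th i.+1 - fT k th i))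
   = (fT k th k.+1 - fT k th k) - (fT k th 1 - fT k th 0).
  by rewrite -(big_mkord xpredT (fun i => (fT k th i.+2 - fT k th i.+1) - (fT k th i.+1 - fT k th i))) (telescope_sumr (fun i => fT k th i.+1 - fT k th i)).
move: hsum; under eq_bigr do rewrite r.
rewrite sumrB -mulr_sumr tel fTk1 fT0 fTk_eq1 -/S => hsum.
have hS : (2 * cos th - 2) * S = k%:R * (2 * cos th - 2) - 2 * fT k th 1 by lra.
rewrite -(mulKf c2 S) hS /fT mul1r.
field; rewrite ?c1 ?c2 //.
Qed.

Lemma D_pos : 0 < k.+1%:R - sin th / (1 - cos th) * tan (k.+1%:R / 2 * th).
Proof.
rewrite -fT_sum (bigD1 (Ordinal hk)) //=.
apply: (lt_le_trans (fT_pos 1 (leqnn 1) hk)).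
rewrite lerDl sumr_ge0 // => i _; apply: ltW; apply: fT_pos => //.
Qed.
End Trig.

Local Open Scope classical_set_scope.
Local Open Scope ring_scope.

Arguments Qf {R} c {k} y.
Arguments bm {R}.

Definition ext {R : realType} (n : nat) (y : 'I_n -> R) : 'I_n.+1 -> R :=
  fun i => if @insub nat (fun m => (m < n)%N) 'I_n (i : nat) is Some j then y j else 0.

Arguments ext {R n} y _.
Section C.
Variable R : realType.

Lemma ext_widen n (y : 'I_n -> R) (j : 'I_n) : ext y (widen_ord (leqnSn n) j) = y j.
Proof.
rewrite /ext /=; case: insubP => [j' _ e|]; last by rewrite ltn_ord.
by congr y; apply: val_inj; rewrite e.
Qed.

Lemma ext_max n (y : 'I_n -> R) : ext y ord_max = 0.
Proof.
rewrite /ext /=; case: insubP => [j' _ e|//].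
by have := ltn_ord j'; rewrite e ltnn.
Qed.

Lemma ext_sum n (y : 'I_n -> R) : \sum_(i < n.+1) ext y i = \sum_(i < n) y i.
Proof.
rewrite big_ord_recr /= ext_max addr0; apply: eq_bigr => i _; exact: ext_widen.
Qed.

Lemma ext_Qf n (c : R) (y : 'I_n -> R) : Qf c (ext y) = Qf c y.
Proof.
rewrite /Qf big_ord_recr /= ext_max.
rewrite [X in _ + X]big1 ?addr0; last by move=> l _; rewrite !mul0r.
apply: eq_bigr => i _; rewrite big_ord_recr /= ext_max mulr0 addr0 ext_widen.
by apply: eq_bigr => l _; rewrite ext_widen.
Qed.

Lemma qform_Pk (n : nat) (p c : R) (x : 'I_n -> R) : 2 * c * (1 - p) = 2 * p - 1 ->
  qform (M_K (Ptilde n) p) x = (1 - p) * (\sum_(i < n) x i) ^+ 2 + (1 - p) * Qf c x.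
Proof.
move=> hc.
rewrite /qform /Qf sq_sum !mulr_sumr -big_split /=; apply: eq_bigr => i _.
rewrite !mulr_sumr -big_split /=; apply: eq_bigr => l _.
rewrite /M_K mxE /= /Pk_ecol /bm -val_eqE /=.
have hh := congr1 (fun t => t * (x i * x l)) hc; simpl in hh.
case: (@eqP nat i l) => ?; case: (@eqP nat i.+1 l) => ?; case: (@eqP nat l.+1 i) => ? /=;
  first [by exfalso; lia | lra].
Qed.

Lemma key_bound (k : nat) (c : R) (xs : 'I_k -> R) (G : R) :
  (forall i : 'I_k, \sum_(l < k) bm c i l * xs l = - G) -> \sum_(i < k) xs i = 1 ->
  forall x : 'I_k -> R, \sum_(i < k) x i = 1 ->
  - G + 2 * (c - cos (2 * pi / k.+1%:R)) * \sum_(i < k) (x i - xs i) ^+ 2 <= Qf c x.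
Proof.
move=> hB hs x hx.
pose d := fun i => x i - xs i.
have sd : \sum_(i < k) d i = 0 by rewrite /d sumrB hx hs subrr.
have ex : Qf c x = Qf c (fun i => xs i + d i).
  by congr (Qf c _); apply: funext => i; rewrite /d /=; ring.
rewrite ex (@Qf_add R c k xs d) (@Qf_shift R c (cos (2 * pi / k.+1%:R)) k d).
have -> : \sum_(i < k) d i * \sum_(l < k) bm c i l * xs l = 0.
  under eq_bigr => i _ do rewrite hB.
  by rewrite -mulr_suml sd mul0r.
have -> : Qf c xs = - G.
  rewrite Qf_Bx; under eq_bigr => i _ do rewrite hB.
  by rewrite -mulr_suml hs mul1r.
have := @Qf0_ge0 R k d sd.
rewrite /d /=; lra.
Qed.

Lemma last_part (n : nat) (p c G : R) (xs : 'I_n.+1 -> R) :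
  (0 < n)%N -> 0 < 1 - p -> 2 * c * (1 - p) = 2 * p - 1 ->
  cos (2 * pi / n.+2%:R) < c ->
  (forall i : 'I_n.+1, \sum_(l < n.+1) bm c i l * xs l = - G) ->
  \sum_(i < n.+1) xs i = 1 -> 0 < xs ord_max ->
  (1 - p) * (1 - G) < g_K (Ptilde n) p.
Proof.
move=> n0 q0 hc cc hB hs xm.
rewrite /g_K.
set E := [set _ | _].
have lbE : lbound E ((1 - p) * (1 - G) + 2 * (1 - p) * (c - cos (2 * pi / n.+2%:R)) * xs ord_max ^+ 2).
  move=> _ [y [y0 sy] ->].
  move: sy => /= sy.
  rewrite (@qform_Pk n p c y hc) sy expr1n mulr1 -ext_Qf.
  have sy2 : \sum_(i < n.+1) ext y i = 1 by rewrite ext_sum.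
  have := @key_bound n.+1 c xs G hB hs (ext y) sy2.
  have : xs ord_max ^+ 2 <= \sum_(i < n.+1) (ext y i - xs i) ^+ 2.
    rewrite (bigD1 ord_max) //= ext_max sub0r sqrrN lerDl.
    by apply: sumr_ge0 => i _; exact: sqr_ge0.
  set S := \sum_(i < n.+1) _; set Q := Qf c (ext y); set m := xs ord_max ^+ 2.
  move=> h1 h2.
  have h3 : - G + 2 * (c - cos (2 * pi / n.+2%:R)) * m <= Q by nra.
  nra.
have memE : E !=set0.
  exists (qform (M_K (Ptilde n) p) (fun j : 'I_n => if 0%N == (j:nat) then 1 else 0)).
  exists (fun j : 'I_n => if 0%N == (j:nat) then 1 else 0) => //.
  split; first by move=> i; case: ifP.
  exact: (@sum_pick_nat R n 0 (fun _ => 1) (or_introl n0)).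
apply: (lt_le_trans _ (lb_le_inf memE lbE)).
rewrite ltrDl mulr_gt0 //; last by rewrite exprn_gt0.
by rewrite mulr_gt0 // ?mulr_gt0 // subr_gt0.
Qed.
End C.

Theorem mainTheorem10 (R : realType) (k : nat) (p theta : R) :
  (3 <= k)%N ->
  p_k R k < p -> p <= p_k R k.+1 ->
  2 * pi / k.+2%:R < theta -> theta <= 2 * pi / k.+1%:R ->
  2 * cos theta = (2 * p - 1) / (1 - p) ->
  let G := 2 * (1 - cos theta) /
           (k.+1%:R - sin theta / (1 - cos theta) * tan (k.+1%:R / 2 * theta)) in
  let x : 'I_(crg_size (Ptilde k)) -> R := fun i =>
    G / (2 - 2 * cos theta) *
      (1 - cos ((i : nat).+1%:R * theta)
         - sin ((i : nat).+1%:R * theta) * tan (k.+1%:R / 2 * theta)) in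
  [/\ g_K (Ptilde k) p = (1 - p) * (1 - G),
      is_minimizer (Ptilde k) p x,
      (forall y, is_minimizer (Ptilde k) p y -> y = x)
    & (p < p_k R k.+1 -> g_K (Ptilde k.-1) p > g_K (Ptilde k) p)].
Proof.
move=> hk hp1 hp2 ht1 ht2 hc G x.
have hk1 : (0 < k)%N by lia.
have hp := @pi_gt0 R.
have cpos : forall m : nat, (4 <= m)%N -> 0 <= cos (2 * pi / m%:R) :> R.
  move=> m hm; apply: cos_ge0_pihalf.
  have m4 : (4%:R : R) <= m%:R by rewrite ler_nat.
  have m0 : (0 : R) < m%:R by rewrite ltr0n; lia.
  have a0 : 0 <= 2 * pi / m%:R :> R by rewrite divr_ge0 // ?mulr_ge0 // ltW.
  apply/andP; split; first lra.
  rewrite ler_pdivrMr //; nra.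
have q0 : 0 < 1 - p.
  move: hp2; rewrite /p_k => h.
  have c2 := cpos k.+2 ltac:(lia).
  have : 0 < (2 * cos (2 * pi / k.+2%:R) + 2)^-1 :> R by rewrite invr_gt0; lra.
  lra.
have qn : 1 - p != 0 by rewrite gt_eqF.
have hc' : 2 * cos theta * (1 - p) = 2 * p - 1 by rewrite hc divfK.
have cc0 : cos (2 * pi / k.+1%:R) < cos theta.
  move: hp1; rewrite /p_k => h.
  have c0p := cpos k.+1 ltac:(lia).
  have w0 : 0 < 2 * cos (2 * pi / k.+1%:R) + 2 :> R by lra.
  have : 1 - p < (2 * cos (2 * pi / k.+1%:R) + 2)^-1 by lra.
  rewrite -[(_ + 2)^-1]mul1r ltr_pdivlMr // => h2.
  nra.
have ct1 : cos theta < 1 := @cos_th_lt1 R k theta hk1 ht1 ht2.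
have Dp := @D_pos R k theta hk1 ht1 ht2.
pose D := k.+1%:R - sin theta / (1 - cos theta) * tan (k.+1%:R / 2 * theta).
have Gpos : 0 < G by rewrite /G divr_gt0 // mulr_gt0 // subr_gt0.
have n2 : 2 * (1 - cos theta) != 0 by rewrite gt_eqF //; lra.
have hs : G / (2 - 2 * cos theta) = D^-1.
  have e2c : 2 - 2 * cos theta = 2 * (1 - cos theta) by ring.
  by rewrite /G e2c mulrAC mulfV ?mul1r.
have xE : forall i : 'I_k, x i = D^-1 * fT k theta i.+1.
  by move=> i; rewrite /x hs.
have hsum1 : \sum_(i < k) x i = 1.
  rewrite (eq_bigr _ (fun i _ => xE i)) -mulr_sumr (@fT_sum R k theta hk1 ht1 ht2).
  by rewrite mulVf // gt_eqF.
have hpos : forall i : 'I_k, 0 < x i.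
  move=> i; rewrite xE mulr_gt0 // ?invr_gt0 //.
  apply: fT_pos => //; exact: ltn_ord.
have hB : forall i : 'I_k, \sum_(l < k) bm (cos theta) i l * x l = - G.
  move=> i.
  under eq_bigr => l _ do rewrite xE.
  have F0 : D^-1 * fT k theta 0 = 0 by rewrite fT0 mulr0.
  have Fk : D^-1 * fT k theta k.+1 = 0 by rewrite (@fTk1 R k theta ht1 ht2) mulr0.
  have := @bm_apply R (cos theta) k i (fun a => D^-1 * fT k theta a) F0 Fk.
  move=> /= ->.
  have r := @fT_rec R k theta i.
  transitivity (D^-1 * (2 * cos theta * fT k theta i.+1 - fT k theta i - fT k theta i.+2)).
    by ring.
  rewrite r /G -/D; ring.
have hq : forall y : 'I_k -> R, \sum_(i < k) y i = 1 ->
    qform (M_K (Ptilde k) p) y = (1 - p) + (1 - p) * @Qf R (cos theta) k y.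
  by move=> y sy; rewrite (@qform_Pk R k p (cos theta) y hc') sy expr1n mulr1.
have hQx : @Qf R (cos theta) k x = - G.
  rewrite Qf_Bx; under eq_bigr => i _ do rewrite hB.
  by rewrite -mulr_suml hsum1 mul1r.
have lb : forall y : 'I_k -> R, \sum_(i < k) y i = 1 ->
    (1 - p) * (1 - G) <= qform (M_K (Ptilde k) p) y.
  move=> y sy; rewrite hq //.
  have := @key_bound R k (cos theta) x G hB hsum1 y sy.
  have : 0 <= \sum_(i < k) (y i - x i) ^+ 2 by apply: sumr_ge0 => i _; apply: sqr_ge0.
  set S := \sum_(i < k) _; set Q := Qf _ y => h1 h2.
  have h3 : - G <= Q by nra.
  nra.
have gK : g_K (Ptilde k) p = (1 - p) * (1 - G).
  rewrite /g_K; set E := [set _ | _].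
  have memE : E ((1 - p) * (1 - G)).
    exists x; first by split; [move=> i; apply: ltW | exact: hsum1].
    by rewrite hq // hQx; ring.
  have lbE : lbound E ((1 - p) * (1 - G)).
    by move=> _ [y [y0 sy] ->]; apply: lb.
  apply/eqP; rewrite eq_le; apply/andP; split.
  - exact: (ge_inf (ex_intro _ _ lbE) memE).
  - exact: (lb_le_inf (ex_intro _ _ memE) lbE).
split.
- exact: gK.
- split; first by split; [move=> i; apply: ltW | exact: hsum1].
  by rewrite gK hq // hQx; ring.
- move=> y [[y0 sy] hy].
  move: sy hy => /= sy; rewrite gK hq // => hy.
  have hQy : @Qf R (cos theta) k y = - G.
    by apply: (mulfI qn); lra.
  have := @key_bound R k (cos theta) x G hB hsum1 y sy.
  rewrite hQy => hh.
  have S0 : \sum_(i < k) (y i - x i) ^+ 2 = 0.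
    apply/eqP; rewrite eq_le sumr_ge0 ?andbT; last by move=> i _; apply: sqr_ge0.
    nra.
  apply: funext => i.
  have h0 := psumr_eq0P (fun j _ => sqr_ge0 (y j - x j)) S0.
  have := @h0 i isT.
  by move/eqP; rewrite sqrf_eq0 subr_eq0 => /eqP.
- move=> _.
  have [k' ek] : exists k', k = k'.+1 by exists k.-1; lia.
  subst k; rewrite gK /=.
  apply: (@last_part R k' p (cos theta) G x) => //.
  + lia.
Qed.
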